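(* Let $Q_1,\dots,Q_k\colon\{0,1\}^m\to\{0,1\}$ and $Q^*\colon\{0,1\}^m\to S$ be functions with $S$ a finite set, and fix $\Gamma\colon\{0,1\}^k\times S\to\{0,1\}^n$. For $\sigma\in S$ let $\Gamma_\sigma\colon\{0,1\}^k\to\{0,1\}^n$ be $\Gamma_\sigma(x_1,\dots,x_k)=\Gamma(x_1,\dots,x_k,\sigma)$. Let $X$ be uniform on $\{0,1\}^m$ and $\mathcal{Y}$ a distribution on $\{0,1\}^n$ such that $\|\Gamma_\sigma(Q_1(X),\dots,Q_k(X))-\mathcal{Y}\|_{\mathtt{TV}}\ge1-\varepsilon$ for all $\sigma\in S$, and suppose $\Pr[Q^*(X)=\sigma]\ge\tau$ for all $\sigma\in S$. Then \[ \|\Gamma(Q_1(X),\dots,Q_k(X),Q^*(X))-\mathcal{Y}\|_{\mathtt{TV}}\ \ge\ 1-\frac{4\varepsilon|S|}{\tau}. \]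
   Context: Total variation distance: $\frac12\sum_x|\mathcal{D}_1(x)-\mathcal{D}_2(x)|$. *)

(* Defs.v *)
From mathcomp Require Import all_boot all_order all_algebra.
Set Implicit Arguments. Unset Strict Implicit. Unset Printing Implicit Defensive.
Import Order.TTheory GRing.Theory Num.Theory.
Local Open Scope ring_scope.

Definition bits (m : nat) := {ffun 'I_m -> bool}.

Definition is_distr (R : numDomainType) (T : finType) (D : {ffun T -> R}) : Prop :=
  (forall x, 0 <= D x) /\ \sum_(x : T) D x = 1.

Definition unif_push (R : numFieldType) (m : nat) (T : finType)
  (f : bits m -> T) : {ffun T -> R} :=
  [ffun y => #|[set x : bits m | f x == y]|%:R / (2 ^ m)%:R].

Definition unif_prob (R : numFieldType) (m : nat) (P : pred (bits m)) : R :=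
  #|[set x : bits m | P x]|%:R / (2 ^ m)%:R.

Definition tv_dist (R : numFieldType) (T : finType) (D1 D2 : {ffun T -> R}) : R :=
  2^-1 * \sum_(x : T) `|D1 x - D2 x|.

(* Main.v *)
Require Import Defs.
From mathcomp Require Import all_boot all_order all_algebra.
From mathcomp Require Import ring lra.
Import Order.TTheory GRing.Theory Num.Theory.
Local Open Scope ring_scope.

Section H.
Variable R : realFieldType.

Definition mn (a b : R) := if a <= b then a else b.

Lemma mn_abs (a b : R) : `|a - b| = a + b - 2 * mn a b.
Proof.
rewrite /mn; case: (lerP a b) => h; lra.
Qed.

Lemma mn_ge0 (a b : R) : 0 <= a -> 0 <= b -> 0 <= mn a b.
Proof. by rewrite /mn; case: ifP. Qed.

Lemma mn_mono (a a' b : R) : a <= a' -> mn a b <= mn a' b.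
Proof.
rewrite /mn => h; case: (lerP a b); case: (lerP a' b) => h1 h2; lra.
Qed.

Lemma mn_sum (I : Type) (r : seq I) (P : pred I) (F : I -> R) (b : R) :
  0 <= b -> (forall i, 0 <= F i) ->
  mn (\sum_(i <- r | P i) F i) b <= \sum_(i <- r | P i) mn (F i) b.
Proof.
move=> hb hF; elim: r => [|x r IH].
  by rewrite !big_nil /mn hb.
rewrite !big_cons; case: (P x) => //.
have hs : 0 <= \sum_(i <- r | P i) F i by apply: sumr_ge0.
have hs' : 0 <= \sum_(i <- r | P i) mn (F i) b
  by apply: sumr_ge0 => i _; apply: mn_ge0.
move: IH; rewrite /mn.
have := hF x.
case: (lerP (F x) b); case: (lerP (\sum_(i <- r | P i) F i) b);
  case: (lerP (F x + \sum_(i <- r | P i) F i) b) => *; lra.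
Qed.

Lemma tv_mn (T : finType) (D1 D2 : {ffun T -> R}) :
  \sum_x D1 x = 1 -> \sum_x D2 x = 1 ->
  tv_dist D1 D2 = 1 - \sum_x mn (D1 x) (D2 x).
Proof.
move=> h1 h2; rewrite /tv_dist.
under eq_bigr do rewrite mn_abs.
rewrite sumrB big_split /= h1 h2 -mulr_sumr.
set s := \sum_(i : T) mn _ _.
field; by rewrite ?pnatr_eq0.
Qed.

Lemma unif_pushE m (T : finType) (f : bits m -> T) y :
  unif_push R f y = (2 ^ m)%:R^-1 * \sum_x (f x == y)%:R.
Proof.
rewrite /unif_push ffunE mulrC; congr (_ * _).
rewrite -sum1_card natr_sum big_mkcond /=; apply: eq_bigr => x _.
by rewrite inE; case: (f x == y).
Qed.

Lemma cpos m : 0 < (2 ^ m)%:R :> R.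
Proof. by rewrite ltr0n expn_gt0. Qed.

Lemma unif_push_distr m (T : finType) (f : bits m -> T) :
  is_distr (unif_push R f).
Proof.
split.
  move=> y; rewrite unif_pushE mulr_ge0 // ?invr_ge0 ?ler0n //.
  by apply: sumr_ge0 => *; rewrite ler0n.
under eq_bigr do rewrite unif_pushE.
rewrite -mulr_sumr exchange_big /=.
have -> : \sum_(x : bits m) \sum_(y : T) ((f x == y)%:R : R) = \sum_(x : bits m) 1.
  apply: eq_bigr => x _; rewrite (bigD1 (f x)) //= eqxx big1 ?addr0 //.
  by move=> y; rewrite eq_sym => /negbTE ->.
rewrite sumr_const card_ffun card_bool card_ord.
by rewrite mulVf // (lt0r_neq0 (cpos m)).
Qed.

End H.
Arguments mn {R}.
Arguments mn_ge0 {R a b}.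
Arguments mn_mono {R a a' b}.
Arguments tv_mn {R T D1 D2}.
Arguments unif_push_distr R {m T}.
Arguments unif_pushE R {m T}.
Arguments mn_sum {R I r P F b}.
Arguments cpos {R}.

Theorem lemma3p6 (R : realFieldType) (m k n : nat) (S : finType)
  (Q : 'I_k -> bits m -> bool) (Qstar : bits m -> S)
  (Gamma : bits k -> S -> bits n)
  (Y : {ffun bits n -> R}) (eps tau : R) :
  is_distr Y ->
  0 < tau ->
  (forall sigma : S,
     tv_dist (unif_push R (fun x => Gamma [ffun i => Q i x] sigma)) Y >= 1 - eps) ->
  (forall sigma : S, unif_prob R (fun x => Qstar x == sigma) >= tau) ->
  tv_dist (unif_push R (fun x => Gamma [ffun i => Q i x] (Qstar x))) Y
    >= 1 - 4 * eps * #|S|%:R / tau.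
Proof.
move=> [Y0 Y1] tau0 Htv Htau.
set w : R := (2 ^ m)%:R^-1.
have w0 : 0 <= w by rewrite /w invr_ge0 ltW // cpos.
pose F s x := Gamma [ffun i => Q i x] s.
pose T s y := w * \sum_x ((Qstar x == s)%:R * (F s x == y)%:R).
have PT : forall y, unif_push R (fun x => F (Qstar x) x) y = \sum_s T s y.
  move=> y; rewrite unif_pushE /T -mulr_sumr; congr (_ * _).
  rewrite exchange_big /=; apply: eq_bigr => x _.
  rewrite (bigD1 (Qstar x)) //= eqxx mul1r big1 ?addr0 //.
  by move=> s; rewrite eq_sym => /negbTE ->; rewrite mul0r.
have T0 : forall s y, 0 <= T s y.
  move=> s y; rewrite /T mulr_ge0 //; apply: sumr_ge0 => x _.
  by rewrite mulr_ge0 ?ler0n.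
have TP : forall s y, T s y <= unif_push R (F s) y.
  move=> s y; rewrite unif_pushE /T ler_wpM2l //; apply: ler_sum => x _.
  by case: (Qstar x == s); rewrite ?mul1r ?mul0r ?ler0n.
have x0 : bits m := [ffun=> false].
have eps0 : 0 <= eps.
  have := Htv (Qstar x0).
  have [_ h] := unif_push_distr R (F (Qstar x0)).
  rewrite (tv_mn h Y1) => h2.
  have : 0 <= \sum_y mn (unif_push R (F (Qstar x0)) y) (Y y).
    apply: sumr_ge0 => y _; apply: mn_ge0 => //.
    by have [h3 _] := unif_push_distr R (F (Qstar x0)).
  rewrite /F in h2 *; lra.
have tau1 : tau <= 1.
  apply: le_trans (Htau (Qstar x0)) _.
  rewrite /unif_prob ler_pdivrMr ?cpos // mul1r.
  have := max_card [set x : bits m | Qstar x == Qstar x0].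
  rewrite card_ffun card_bool card_ord => h.
  by rewrite ler_nat.
have main : \sum_y mn (unif_push R (fun x => F (Qstar x) x) y) (Y y)
             <= #|S|%:R * eps.
  apply: (@le_trans _ _ (\sum_y \sum_s mn (unif_push R (F s) y) (Y y))).
    apply: ler_sum => y _; rewrite PT.
    apply: le_trans (mn_sum (Y0 y) (T0^~ y)) _.
    by apply: ler_sum => s _; apply: mn_mono.
  rewrite exchange_big /= -sum1_card natr_sum mulr_suml.
  apply: ler_sum => s _; rewrite mul1r.
  have := Htv s; have [_ h] := unif_push_distr R (F s).
  rewrite (tv_mn h Y1) /F; lra.
have [_ h] := unif_push_distr R (fun x => F (Qstar x) x).
rewrite (tv_mn h Y1) /F in main *.
have N0 : 0 <= #|S|%:R :> R by rewrite ler0n.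
have t1 : 1 <= tau^-1 by rewrite invf_ge1.
have : #|S|%:R * eps <= 4 * eps * #|S|%:R / tau.
  set a := #|S|%:R * eps.
  have -> : 4 * eps * #|S|%:R / tau = 4 * a * tau^-1 by rewrite /a; ring.
  have a0 : 0 <= a by rewrite mulr_ge0.
  nra.
lra.
Qed.
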